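(* Under the setting below, let $(x^*,z^*,s^* )$ with multiplier $\lambda^*$ for (C) (and nonnegative multipliers for the other constraints) be a KKT point of (P). Then for every $t$ with $(\beta_t,\theta_t)\in\Omega^{II}_t(\lambda^* )$ we have $(x_t^*,z_t^* )=(1,z^{II}_t(\lambda^* ))$, where $z^{II}_t(\lambda)=1-a_t(\beta_t,\lambda)$ and $\Omega^{II}_t(\lambda)=\Big\{(\beta,\theta):\beta>0,\ \theta>\frac{X_t(\lambda)}{u_t'(1)},\ \beta\ge\frac{p_tc_t+r_t\lambda}{c_te_t'(c_t)}\Big\}$.
   Context: Fix an integer $T\ge 1$, a data cap $Q>0$ and an overage fee $\pi>0$. For each $t\in\{1,\dots,T\}$ fix reals $d_t\ge 0$, $r_t\ge 0$, $c_t>0$, $p_t>0$, $\theta_t>0$, $\beta_t>0$ and functions $u_t,e_t:[0,\infty)\to\mathbb{R}$ such that: $u_t$ is continuous, increasing and strictly concave, differentiable on $(0,\infty)$, and $u_t':(0,\infty)\to(0,\infty)$ is a strictly decreasing bijection with inverse $u_t'^{-1}$; $e_t$ is increasing, strictly convex and continuously differentiable, and $e_t':[0,\infty)\to[0,\infty)$ is a strictly increasing bijection with inverse $e_t'^{-1}$. For $0\le z\le x\le 1$ let $\tilde f_t(x,z)=\theta_t u_t(x)-\beta_t e_t((x-z)c_t)-p_t c_t z$ and $\tilde h_t(x,z)=d_t x+r_t z$. Problem (P): maximize $\sum_{t=1}^T \tilde f_t(x_t,z_t)-\pi s$ over $x,z\in\mathbb{R}^T$, $s\in\mathbb{R}$,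 subject to $0\le z_t\le x_t\le 1$ for all $t$, $s\ge 0$, and (C): $s\ge \sum_{t=1}^T\tilde h_t(x_t,z_t)-Q$. A KKT point of (P) consists of a feasible $(x^*,z^*,s^* )$ and nonnegative Lagrange multipliers for all constraints satisfying stationarity of the Lagrangian and complementary slackness; $\lambda^*$ denotes the multiplier of (C) (the shadow price of wireless data). For $\lambda\ge 0$ and $\beta>0$ write $a_t(\beta,\lambda)=\frac{1}{c_t}\,e_t'^{-1}\!\Big(\frac{p_tc_t+r_t\lambda}{\beta c_t}\Big)$ and $X_t(\lambda)=p_tc_t+(d_t+r_t)\lambda$. *)

(* Defs.v *)
(* concrete reals R. Indices t range over {0,...,T-1}
   (the paper's {1,...,T} shifted by one). *)
From Stdlib Require Import Reals Lra.
Open Scope R_scope.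

Definition cont_nonneg (f : R -> R) (x : R) : Prop :=
  limit1_in f (fun y => 0 <= y) (f x) x.

(* f has derivative l at x relative to the domain [0,oo)
   (one-sided at x = 0, ordinary derivative for x > 0). *)
Definition deriv_nonneg (f : R -> R) (x l : R) : Prop :=
  limit1_in (fun y => (f y - f x) / (y - x)) (fun y => 0 <= y /\ y <> x) l x.

Definition sumT (T : nat) (g : nat -> R) : R := sum_f_R0 g (T - 1).

Definition htilde (d r : nat -> R) (t : nat) (xt zt : R) : R := d t * xt + r t * zt.

(* Lagrangian:
   L = sum_t f~_t(x_t,z_t) - pi s + lam (s - sum_t h~_t + Q) + mu s
       + sum_t [alpha_t (x_t - z_t) + gamma_t (1 - x_t) + nu_t z_t].
   Stationarity requires the partial derivatives to exist (for x_t this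
   means u_t is differentiable at x_t relative to [0,oo)) and vanish. *)
Definition KKT (T : nat) (Q pi : R) (d r c p theta beta : nat -> R)
  (u e de : nat -> R -> R) (x z : nat -> R) (s lam : R) : Prop :=
  exists (mu : R) (alpha gamma nu : nat -> R),
    (forall t, (t < T)%nat -> 0 <= z t /\ z t <= x t /\ x t <= 1) /\
    0 <= s /\
    s >= sumT T (fun t => htilde d r t (x t) (z t)) - Q /\
    0 <= lam /\ 0 <= mu /\
    (forall t, (t < T)%nat -> 0 <= alpha t /\ 0 <= gamma t /\ 0 <= nu t) /\
    (forall t, (t < T)%nat ->
       (exists g, deriv_nonneg (u t) (x t) g /\
          theta t * g - beta t * c t * de t ((x t - z t) * c t)
          - lam * d t + alpha t - gamma t = 0) /\
       beta t * c t * de t ((x t - z t) * c t) - p t * c t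
          - lam * r t - alpha t + nu t = 0) /\
    - pi + lam + mu = 0 /\
    (forall t, (t < T)%nat ->
       alpha t * (x t - z t) = 0 /\ gamma t * (1 - x t) = 0 /\ nu t * z t = 0) /\
    mu * s = 0 /\
    lam * (s - (sumT T (fun t => htilde d r t (x t) (z t)) - Q)) = 0.

Definition a_fun (r c p : nat -> R) (deinv : nat -> R -> R) (t : nat) (b lam : R) : R :=
  / c t * deinv t ((p t * c t + r t * lam) / (b * c t)).

Definition X_fun (d r c p : nat -> R) (t : nat) (lam : R) : R :=
  p t * c t + (d t + r t) * lam.

Definition zII (r c p beta : nat -> R) (deinv : nat -> R -> R) (t : nat) (lam : R) : R :=
  1 - a_fun r c p deinv t (beta t) lam.

Definition OmegaII (d r c p : nat -> R) (du de : nat -> R -> R) (t : nat) (lam : R)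
  (b th : R) : Prop :=
  b > 0 /\ th > X_fun d r c p t lam / du t 1 /\
  b >= (p t * c t + r t * lam) / (c t * de t (c t)).

(* Main.v *)
Require Import Defs.
From Stdlib Require Import Reals Lra Psatz.
Open Scope R_scope.

Lemma lemA (f f' : R -> R) :
  (forall y, 0 < y -> derivable_pt_lim f y (f' y)) ->
  (forall y1 y2, 0 < y1 -> y1 < y2 -> f' y2 < f' y1) ->
  cont_nonneg f 0 ->
  forall a b, 0 <= a -> a < b -> f b - f a >= f' b * (b - a).
Proof.
  intros Hd Hm Hc.
  assert (Hpos : forall a b, 0 < a -> a < b -> f b - f a >= f' b * (b - a)).
  { intros a b Ha Hab.
    destruct (MVT_cor2 f f' a b Hab) as [xi [E Hxi]].
    { intros c0 Hc0. apply Hd. lra. }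
    rewrite E. assert (f' b < f' xi) by (apply Hm; lra). nra. }
  intros a b Ha Hab. destruct (Rle_lt_or_eq_dec 0 a Ha) as [Ha'|Ha'].
  - apply Hpos; lra.
  - subst a. apply Rnot_lt_ge. intro Hlt.
    set (dl := f' b * (b - 0) - (f b - f 0)).
    assert (Hdl : dl > 0) by (unfold dl; lra).
    destruct (Hc (dl/2)) as [alp [Halp H]]; [lra|].
    set (k := Rabs (f' b) + 1).
    assert (Hk : k > 0) by (unfold k; pose proof (Rabs_pos (f' b)); lra).
    set (eps := Rmin (alp/2) (Rmin (b/2) (dl/(2*k)))).
    assert (He1 : eps <= alp/2) by apply Rmin_l.
    assert (He2 : eps <= b/2) by (eapply Rle_trans; [apply Rmin_r|apply Rmin_l]).
    assert (He3 : eps <= dl/(2*k)) by (eapply Rle_trans; [apply Rmin_r|apply Rmin_r]).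
    assert (He0 : eps > 0).
    { unfold eps. apply Rmin_glb_lt; [lra|apply Rmin_glb_lt; [lra|]].
      apply Rdiv_lt_0_compat; lra. }
    assert (Hek : eps * k <= dl/2).
    { apply Rmult_le_compat_r with (r:=k) in He3; [|lra].
      replace (dl / (2*k) * k) with (dl/2) in He3 by (field; lra). lra. }
    assert (Hfe : f' b * eps <= dl/2).
    { pose proof (Rle_abs (f' b)). unfold k in Hek. nra. }
    specialize (H eps). simpl in H. unfold Rdist in H.
    assert (Hx : Rabs (f eps - f 0) < dl/2).
    { apply H. split; [lra|]. rewrite Rminus_0_r, Rabs_right; lra. }
    pose proof (Hpos eps b He0 ltac:(lra)).
    apply Rabs_def2 in Hx. unfold dl in *. lra.
Qed.

Lemma lemB (f f' : R -> R) :
  (forall y, 0 < y -> derivable_pt_lim f y (f' y)) ->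
  (forall y1 y2, 0 < y1 -> y1 < y2 -> f' y2 < f' y1) ->
  cont_nonneg f 0 ->
  forall x g, 0 <= x -> x < 1 -> deriv_nonneg f x g -> g >= f' 1.
Proof.
  intros Hd Hm Hc x g Hx Hx1 Hg.
  apply Rnot_lt_ge. intro Hlt.
  destruct (Hg (f' 1 - g)) as [alp [Halp H]]; [lra|].
  set (y := x + Rmin alp (1 - x) / 2).
  assert (Hm1 : Rmin alp (1-x) <= alp) by apply Rmin_l.
  assert (Hm2 : Rmin alp (1-x) <= 1 - x) by apply Rmin_r.
  assert (Hm0 : Rmin alp (1-x) > 0) by (apply Rmin_glb_lt; lra).
  specialize (H y). simpl in H. unfold Rdist in H.
  assert (Hq : Rabs ((f y - f x) / (y - x) - g) < f' 1 - g).
  { apply H. unfold y. split; [split; lra|].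
    replace (x + Rmin alp (1 - x) / 2 - x) with (Rmin alp (1 - x) / 2) by ring.
    rewrite Rabs_right; lra. }
  pose proof (lemA f f' Hd Hm Hc x y Hx ltac:(unfold y; lra)) as HA.
  assert (Hy1 : f' 1 <= f' y).
  { destruct (Req_dec y 1) as [E|E]; [rewrite E; lra|].
    left. apply Hm; unfold y in *; lra. }
  assert (Hq2 : (f y - f x) / (y - x) >= f' y).
  { apply Rle_ge. apply Rmult_le_reg_r with (r := y - x). unfold y; lra.
    unfold Rdiv. rewrite Rmult_assoc, Rinv_l by (unfold y; lra). lra. }
  apply Rabs_def2 in Hq. lra.
Qed.

Theorem lemma2 (T : nat) (Q pi : R)
  (d r c p theta beta : nat -> R)
  (u e du de deinv : nat -> R -> R)
  (x z : nat -> R) (s lam : R) :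
  (1 <= T)%nat -> 0 < Q -> 0 < pi ->
  (forall t, (t < T)%nat ->
     0 <= d t /\ 0 <= r t /\ 0 < c t /\ 0 < p t /\ 0 < theta t /\ 0 < beta t) ->
  (* assumptions on u_t *)
  (forall t, (t < T)%nat ->
     (forall y, 0 <= y -> cont_nonneg (u t) y) /\
     (forall y1 y2, 0 <= y1 -> y1 < y2 -> u t y1 < u t y2) /\
     (forall y1 y2 a, 0 <= y1 -> 0 <= y2 -> y1 <> y2 -> 0 < a < 1 ->
        u t (a * y1 + (1 - a) * y2) > a * u t y1 + (1 - a) * u t y2) /\
     (forall y, 0 < y -> derivable_pt_lim (u t) y (du t y)) /\
     (forall y, 0 < y -> 0 < du t y) /\
     (forall y1 y2, 0 < y1 -> y1 < y2 -> du t y2 < du t y1) /\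
     (forall w, 0 < w -> exists y, 0 < y /\ du t y = w)) ->
  (* assumptions on e_t *)
  (forall t, (t < T)%nat ->
     (forall y1 y2, 0 <= y1 -> y1 < y2 -> e t y1 < e t y2) /\
     (forall y1 y2 a, 0 <= y1 -> 0 <= y2 -> y1 <> y2 -> 0 < a < 1 ->
        e t (a * y1 + (1 - a) * y2) < a * e t y1 + (1 - a) * e t y2) /\
     (forall y, 0 <= y -> deriv_nonneg (e t) y (de t y)) /\
     (forall y, 0 <= y -> cont_nonneg (de t) y) /\
     (forall y, 0 <= y -> 0 <= de t y) /\
     (forall y1 y2, 0 <= y1 -> y1 < y2 -> de t y1 < de t y2) /\
     (forall w, 0 <= w -> exists y, 0 <= y /\ de t y = w) /\
     (forall w, 0 <= w -> 0 <= deinv t w /\ de t (deinv t w) = w) /\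
     (forall y, 0 <= y -> deinv t (de t y) = y)) ->
  KKT T Q pi d r c p theta beta u e de x z s lam ->
  forall t, (t < T)%nat ->
    OmegaII d r c p du de t lam (beta t) (theta t) ->
    x t = 1 /\ z t = zII r c p beta deinv t lam.
Proof.
  intros HT HQ Hpi Hpar Hu He HK t Ht HO.
  destruct (Hpar t Ht) as [Hd [Hr [Hc [Hp [Hth Hb]]]]].
  destruct (Hu t Ht) as [Huc [_ [_ [Hud [Hdup [Hdum _]]]]]].
  destruct (He t Ht) as [_ [_ [_ [_ [Hde0 [Hdem [_ [Hinv Hinv2]]]]]]]].
  destruct HK as [mu [alpha [gamma [nu [Hfeas [_ [_ [Hlam [_ [Hdual [Hstat [_ [Hcs _]]]]]]]]]]]]].
  destruct (Hfeas t Ht) as [Hz0 [Hzx Hx1]].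
  destruct (Hdual t Ht) as [Ha0 [Hg0 Hn0]].
  destruct (Hstat t Ht) as [[g [Hg E1]] E2].
  destruct (Hcs t Ht) as [C1 [C2 C3]].
  destruct HO as [_ [HO2 HO3]].
  assert (Hdu1 : 0 < du t 1) by (apply Hdup; lra).
  assert (Hx : x t = 1).
  { destruct (Req_dec (x t) 1) as [E|E]; [exact E|exfalso].
    assert (Hgam : gamma t = 0).
    { destruct (Req_dec (gamma t) 0) as [G|G]; [exact G|].
      exfalso. apply E. apply Rmult_integral in C2. destruct C2; [contradiction|lra]. }
    assert (Hg1 : g >= du t 1).
    { apply (lemB (u t) (du t) Hud Hdum (Huc 0 (Rle_refl 0)) (x t)); [lra|lra|exact Hg]. }
    assert (HX : theta t * du t 1 > X_fun d r c p t lam).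
    { apply Rmult_gt_compat_r with (r := du t 1) in HO2; [|lra].
      unfold Rdiv in HO2. rewrite Rmult_assoc, Rinv_l in HO2 by lra. lra. }
    unfold X_fun in HX. nra. }
  split; [exact Hx|].
  rewrite Hx in *.
  set (K := (p t * c t + r t * lam) / (beta t * c t)).
  assert (HK0 : 0 <= K).
  { unfold K. apply Rmult_le_pos; [nra|]. left. apply Rinv_0_lt_compat. nra. }
  unfold zII, a_fun. fold K.
  assert (Hbc : beta t * c t > 0) by nra.
  destruct (Req_dec (z t) 1) as [Z1|Z1].
  -
    assert (Hnu : nu t = 0) by (rewrite Z1 in C3; lra).
    destruct (Hinv K HK0) as [Hi0 Hi1].
    assert (Hi : deinv t K = 0).
    { destruct (Rle_lt_or_eq_dec 0 (deinv t K) Hi0) as [L|L]; [|lra].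
      exfalso. pose proof (Hdem 0 (deinv t K) (Rle_refl 0) L) as D.
      rewrite Hi1 in D. rewrite Z1 in E2.
      replace ((1 - 1) * c t) with 0 in E2 by ring.
      assert (beta t * c t * de t 0 >= beta t * c t * K).
      { assert (HbK : beta t * c t * K = p t * c t + r t * lam) by (unfold K; field; lra).
        lra. }
      nra. }
    rewrite Hi, Z1. field. lra.
  - assert (Hal : alpha t = 0).
    { apply Rmult_integral in C1. destruct C1 as [A|A]; [exact A|lra]. }
    assert (Hw : 0 <= (1 - z t) * c t) by nra.
    assert (Hde : de t ((1 - z t) * c t) = K).
    { destruct (Req_dec (z t) 0) as [Z0|Z0].
      + rewrite Z0 in *. replace ((1 - 0) * c t) with (c t) in * by ring.
        assert (Hdc : de t (c t) > 0).
        { pose proof (Hdem 0 (c t) (Rle_refl 0) Hc). pose proof (Hde0 0 (Rle_refl 0)). lra. }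
        assert (H3 : beta t * (c t * de t (c t)) >= p t * c t + r t * lam).
        { apply Rmult_ge_compat_r with (r := c t * de t (c t)) in HO3; [|nra].
          unfold Rdiv in HO3. rewrite Rmult_assoc, Rinv_l in HO3 by nra. lra. }
        assert (Hb2 : beta t * c t * de t (c t) = p t * c t + r t * lam) by nra.
        unfold K. rewrite <- Hb2. field. lra.
      + assert (Hnu : nu t = 0).
        { apply Rmult_integral in C3. destruct C3 as [A|A]; [exact A|contradiction]. }
        assert (Hb2 : beta t * c t * de t ((1 - z t) * c t) = p t * c t + r t * lam) by nra.
        unfold K. rewrite <- Hb2. field. lra. }
    rewrite <- Hde, Hinv2 by exact Hw. field. lra.
Qed.
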